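(* Let $a,b\in\mathbb C$ and let $x$ be an indeterminate. For integers $0\le p\le k$, set $g_i=P^k_{p+i}(x;a,b)$ for $i=0,\dots,k-p$. Then $$\sum_{i=0}^{k-p}(-1)^{k-p-i}\binom{k-p}{i}g_i=\prod_{i=0}^{p-1}(x+b-i)\prod_{i=0}^{k-p-1}(b-a-p-i).$$
   Context: For integers $0\le i\le k$, $P_i^k(x;a,b):=\prod_{j=0}^{k-i-1}(x+j+a)\prod_{j=0}^{i-1}(x-j+b)$ (empty products equal $1$). *)

(* Defs.v *)
From HB Require Import structures.
From mathcomp Require Import all_boot all_order all_algebra.
Set Implicit Arguments. Unset Strict Implicit. Unset Printing Implicit Defensive.
Import Order.TTheory GRing.Theory Num.Theory.
Local Open Scope ring_scope.

Definition Pki (R : nzRingType) (k i : nat) (a b : R) : {poly R} :=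
  (\prod_(j < k - i) ('X + (j%:R + a)%:P)) *
  (\prod_(j < i) ('X + (b - j%:R)%:P)).

(* Main.v *)
Require Import Defs.
From HB Require Import structures.
From mathcomp Require Import all_boot all_order all_algebra.
Import Order.TTheory GRing.Theory Num.Theory.
From mathcomp Require Import ring.
Set Implicit Arguments. Unset Strict Implicit.
Local Open Scope ring_scope.

Definition ff (R : comNzRingType) (y : R) (n : nat) := \prod_(j < n) (y - j%:R).

Lemma ffS (R : comNzRingType) (y : R) n : ff y n.+1 = ff y n * (y - n%:R).
Proof. by rewrite /ff big_ord_recr. Qed.

Lemma ff0 (R : comNzRingType) (y : R) : ff y 0 = 1.
Proof. by rewrite /ff big_ord0. Qed.

Lemma vander (R : comNzRingType) (y z : R) m :
  ff (y + z) m = \sum_(i < m.+1) 'C(m, i)%:R * ff y (m - i) * ff z i.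
Proof.
elim: m => [|m IH].
  by rewrite big_ord_recl big_ord0 !ff0 /= addr0 mulr1 mul1r.
pose A i := 'C(m, i)%:R * ff y (m.+1 - i) * ff z i.
pose B i := 'C(m, i)%:R * ff y (m - i) * ff z i.+1.
have E1 : \sum_(i < m.+2) 'C(m.+1, i)%:R * ff y (m.+1 - i) * ff z i
    = \sum_(i < m.+2) A i + \sum_(i < m.+1) B i.
  rewrite big_ord_recl [in RHS]big_ord_recl /A /B /=.
  rewrite -addrA; congr (_ + _); first by rewrite !bin0.
  rewrite addrC -big_split /=; apply: eq_bigr => i _.
  rewrite /bump /= binS natrD !mulrDl addrC subSS; congr (_ + _).
have E2 : \sum_(i < m.+2) A i = \sum_(i < m.+1) A i.
  by rewrite big_ord_recr /A /= bin_small // !mul0r addr0.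
rewrite E1 E2 -big_split /= ffS IH mulr_suml; apply: eq_bigr => i _.
rewrite /A /B /=.
have hi : (i <= m)%N by rewrite -ltnS.
rewrite subSn // ffS ffS.
have -> : (y + z - m%:R) = (y - (m - i)%:R) + (z - i%:R).
  by rewrite natrB // ; ring.
by ring.
Qed.

Theorem proposition4 (C : numClosedFieldType) (a b : C) (k p : nat) :
  (p <= k)%N ->
  \sum_(i < (k - p).+1)
     ((-1) ^+ (k - p - i) * ('C(k - p, i))%:R) *: Pki k (p + i) a b
  = (\prod_(i < p) ('X + (b - i%:R)%:P)) *
    (\prod_(i < k - p) (b - a - p%:R - i%:R))%:P.
Proof.
move=> hpk.
set Q := \prod_(i < p) ('X + (b - i%:R)%:P).
set m := (k - p)%N.
pose y : {poly C} := - ('X + a%:P).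
pose z : {poly C} := 'X + (b - p%:R)%:P.
have -> : (\prod_(i < m) (b - a - p%:R - i%:R))%:P = ff (y + z) m.
  rewrite rmorph_prod /ff; apply: eq_bigr => j _.
  rewrite /y /z !polyCB polyC_natr; ring.
rewrite vander mulr_sumr; apply: eq_bigr => i _.
rewrite /Pki.
have -> : (k - (p + i) = m - i)%N by rewrite /m subnDA.
rewrite big_split_ord /=.
have -> : \prod_(j < i) ('X + (b - (p + j)%:R)%:P) = ff z i.
  by apply: eq_bigr => j _; rewrite /z !polyCB polyC_natr natrD; ring.
have -> : ff y (m - i) = (-1) ^+ (m - i) * \prod_(j < m - i) ('X + (j%:R + a)%:P).
  rewrite /ff -[X in (-1) ^+ X](card_ord (m - i)) -prodrN.
  by apply: eq_bigr => j _; rewrite /y polyCD polyC_natr; ring.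
rewrite -mul_polyC rmorphM rmorphXn rmorphN rmorph1 rmorph_nat -/Q.
move: (\prod_(j < m - i) _) (ff z i) Q => F G Q0.
move: ((-1) ^+ (m - i) : {poly C}) ('C(m, i)%:R : {poly C}) => s c; ring.
Qed.
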